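(* Let $G$ and $H$ be connected graphs, each with at least $3$ vertices, let $\ell_1=\lambda_3(G)$, $\ell_2=\lambda_3(H)$, $n_2=|V(H)|$. Let $S=\{x,y,z\}$ be a set of three vertices of $G\circ H$ lying in three pairwise distinct $H$-layers. Then $G\circ H$ contains at least $\ell_2+\ell_1 n_2$ pairwise edge-disjoint $S$-trees.
   Context: For a graph $G$ and $S\subseteq V(G)$ with $|S|\ge 2$, an $S$-tree is a subgraph that is a tree containing all vertices of $S$; $\lambda(S)$ is the maximum number of pairwise edge-disjoint $S$-trees, and $\lambda_3(G)=\min\{\lambda(S): |S|=3\}$. The lexicographic product $G\circ H$ has vertex set $V(G)\times V(H)$, and $(u,v)$ is adjacent to $(u',v')$ iff either $uu'\in E(G)$, or $u=u'$ and $vv'\in E(H)$. For $u\in V(G)$, the $H$-layer $H(u)$ is the vertex set $\{(u,v): v\in V(H)\}$. *)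

(* Defs.v *)
From mathcomp Require Import all_boot.
Set Implicit Arguments. Unset Strict Implicit. Unset Printing Implicit Defensive.

Definition simple_graph (T : finType) (g : rel T) : Prop :=
  symmetric g /\ irreflexive g.

Definition connected_graph (T : finType) (g : rel T) : Prop :=
  forall u v : T, connect g u v.

(* Edges are represented as 2-element vertex sets {u,v}. *)
Definition is_edge (T : finType) (g : rel T) (f : {set T}) : bool :=
  [exists u, exists v, g u v && (f == [set u; v])].

Definition adjF (T : finType) (F : {set {set T}}) : rel T :=
  fun u v => (u != v) && ([set u; v] \in F).

Definition is_subgraph (T : finType) (g : rel T) (W : {set T}) (F : {set {set T}}) : Prop :=
  forall f, f \in F -> is_edge g f /\ f \subset W.

Definition acyclic (T : finType) (F : {set {set T}}) : Prop :=
  ~ exists c : seq T, [/\ uniq c, 2 < size c & cycle (adjF F) c].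

Definition is_tree (T : finType) (g : rel T) (W : {set T}) (F : {set {set T}}) : Prop :=
  [/\ is_subgraph g W F,
      W != set0,
      (forall u v, u \in W -> v \in W -> connect (adjF F) u v)
    & acyclic F].

Definition is_Stree (T : finType) (g : rel T) (S : {set T})
    (t : {set T} * {set {set T}}) : Prop :=
  is_tree g t.1 t.2 /\ S \subset t.1.

(* lambda(S) >= k : there are k pairwise edge-disjoint S-trees. *)
Definition has_trees (T : finType) (g : rel T) (S : {set T}) (k : nat) : Prop :=
  exists tr : 'I_k -> {set T} * {set {set T}},
    (forall i, is_Stree g S (tr i)) /\
    (forall i j, i != j -> [disjoint (tr i).2 & (tr j).2]).

(* l = lambda_3(g) = min_{|S|=3} lambda(S), where lambda(S) is the max k
   with has_trees g S k. *)
Definition is_lambda3 (T : finType) (g : rel T) (l : nat) : Prop :=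
  (forall S : {set T}, #|S| = 3 -> has_trees g S l) /\
  (exists S : {set T}, #|S| = 3 /\ ~ has_trees g S l.+1).

Definition lexprod (T1 T2 : finType) (g : rel T1) (h : rel T2) : rel (T1 * T2) :=
  fun a b => g a.1 b.1 || ((a.1 == b.1) && h a.2 b.2).

(* Main.v *)
Require Import Defs.
From mathcomp Require Import all_boot zify.
From Stdlib Require Import Classical ClassicalEpsilon.
Set Implicit Arguments. Unset Strict Implicit. Unset Printing Implicit Defensive.

Lemma adjF_sym (T : finType) (F : {set {set T}}) : symmetric (adjF F).
Proof. by move=> u v; rewrite /adjF eq_sym setUC. Qed.

Lemma connectF_sym (T : finType) (F : {set {set T}}) u v :
  connect (adjF F) u v = connect (adjF F) v u.
Proof. exact: (sym_connect_sym (@adjF_sym T F)). Qed.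

Lemma set2_pair (T : finType) (a b u v : T) :
  u \in [set a; b] -> v \in [set a; b] -> u != v -> [set u; v] = [set a; b].
Proof.
move=> /set2P [] -> /set2P [] -> //; rewrite ?eqxx // => _; exact: setUC.
Qed.

Lemma is_edgeP (T : finType) (g : rel T) f :
  is_edge g f -> exists a b, g a b /\ f = [set a; b].
Proof. by move=> /existsP [a /existsP [b /andP [gab /eqP ->]]]; exists a, b. Qed.

Lemma connect_map (T T' : finType) (e : rel T) (e' : rel T') (f : T -> T') :
  (forall u v, e u v -> connect e' (f u) (f v)) ->
  forall u v, connect e u v -> connect e' (f u) (f v).
Proof.
move=> H u v /connectP [p hp ->]; elim: p u hp => [|d p IHp] u /=.
  by move=> _; exact: connect0.
by move=> /andP [hud hp]; apply: connect_trans (H _ _ hud) (IHp _ hp).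
Qed.

Section Span.
Variables (T : finType) (g : rel T) (S : {set T}) (x : T).
Hypothesis irg : irreflexive g.

Definition good (F : {set {set T}}) :=
  (forall f, f \in F -> is_edge g f) /\ (forall s, s \in S -> connect (adjF F) x s).

Lemma drop_unreach (F : {set {set T}}) (f : {set T}) y : (forall u, u \in f -> ~~ connect (adjF F) x u) ->
  connect (adjF F) x y -> connect (adjF (F :\ f)) x y.
Proof.
move=> hu /connectP [p hp ->].
have H: forall c, connect (adjF F) x c -> path (adjF F) c p ->
    path (adjF (F :\ f)) c p.
  elim: p {hp} => //= d p IHp c hc /andP [hcd hp].
  apply/andP; split.
    move: hcd; rewrite /adjF => /andP [ne hin]; rewrite ne /= in_setD1 hin andbT.
    apply/eqP => ef; have: c \in f by rewrite -ef set21.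
    by move/hu; rewrite hc.
  by apply: IHp hp; apply: connect_trans hc (connect1 hcd).
apply/connectP; exists p => //; apply: H => //; exact: connect0.
Qed.

Lemma cycle_drop (F : {set {set T}}) c0 c1 rest : uniq [:: c0, c1 & rest] -> 0 < size rest ->
  cycle (adjF F) [:: c0, c1 & rest] ->
  forall u v, connect (adjF F) u v -> connect (adjF (F :\ [set c0; c1])) u v.
Proof.
move=> un srest; rewrite /cycle /= rcons_path => /andP [_ /andP [hp hl]].
have hc : connect (adjF (F :\ [set c0; c1])) c1 c0.
  apply/connectP; exists (rcons rest c0); last by rewrite last_rcons.
  rewrite rcons_path; apply/andP; split.
    have HH := @sub_in_path T (predC1 c0) (adjF F) (adjF (F :\ [set c0; c1])).
    apply: (HH _ _ _ _ hp); last first.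
      move: un => /= /andP [+ _]; rewrite inE negb_or => /andP [ne nin].
      by rewrite /= eq_sym ne /=; apply/allP => w hw /=; apply: contraNneq nin => <-.
    move=> u v /= hu hv; rewrite /adjF => /andP [ne hin]; rewrite ne /= in_setD1 hin andbT.
    apply/eqP => e; have: c0 \in [set u; v] by rewrite e set21.
    by case/set2P => E; [move: hu | move: hv]; rewrite !inE E eqxx.
  move: hl; rewrite /adjF => /andP [ne hin]; rewrite ne /= in_setD1 hin andbT.
  apply/eqP => e; have : c1 \in [set last c1 rest; c0] by rewrite e set22.
  case/set2P => [e1|e1]; last by move: un; rewrite e1 /= inE eqxx.
  move: un => /= /andP [_ /andP [+ _]].
  case: rest srest e1 {hp ne hin e} => // r rest _ /= e1.
  have := mem_last r rest; rewrite -e1 => ->; by [].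
have hc' : connect (adjF (F :\ [set c0; c1])) c0 c1 by rewrite connectF_sym.
apply: connect_sub => u v; rewrite {1}/adjF => /andP [ne hin].
case: (boolP ([set u; v] == [set c0; c1])) => [/eqP e|ne2]; last first.
  by apply: connect1; rewrite /adjF ne /= in_setD1 ne2 hin.
have : u \in [set c0; c1] by rewrite -e set21.
have : v \in [set c0; c1] by rewrite -e set22.
move=> /set2P [] ? /set2P [] ?; subst.
all: try by move: ne; rewrite eqxx.
all: try exact: hc.
all: exact: hc'.
Qed.

Lemma span_step (F : {set {set T}}) : good F ->
  (forall F' : {set {set T}}, F' \proper F -> good F' -> exists t, is_Stree g S t /\ t.2 \subset F') ->
  exists t, is_Stree g S t /\ t.2 \subset F.
Proof.
move=> [hE hC] IH.
case: (boolP [exists f in F, exists u in f, ~~ connect (adjF F) x u]).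
  move/existsP => [f /andP [fF /existsP [u /andP [uf nu]]]].
  have hall : forall w, w \in f -> ~~ connect (adjF F) x w.
    move=> w wf; case: (eqVneq w u) => [-> //|wu].
    apply/negP => cw; move/negP: nu; apply; apply: connect_trans cw (connect1 _).
    have [a [b [gab ef]]] := is_edgeP (hE _ fF).
    by rewrite /adjF wu /= (set2_pair (a:=a) (b:=b)) -?ef.
  have [t [ht tsub]] : exists t, is_Stree g S t /\ t.2 \subset F :\ f.
    apply: IH; first exact: properD1.
    split; first by move=> f' /setD1P [_]; exact: hE.
    by move=> s sS; apply: drop_unreach => //; exact: hC.
  by exists t; split => //; apply: subset_trans tsub (subD1set _ _).
move=> hnA.
have hreach : forall f w, f \in F -> w \in f -> connect (adjF F) x w.
  move=> f w fF wf; apply: contraNT hnA => nw; apply/existsP; exists f.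
  by rewrite fF /=; apply/existsP; exists w; rewrite wf.
case: (classic (exists c, [/\ uniq c, 2 < size c & cycle (adjF F) c])).
  move=> [[|c0 [|c1 rest]] [un sc cc]] //.
  have fin : [set c0; c1] \in F.
    by move: cc; rewrite /cycle /= => /andP [/andP [_ +] _].
  have [t [ht tsub]] : exists t, is_Stree g S t /\ t.2 \subset F :\ [set c0; c1].
    apply: IH; first exact: properD1.
    split; first by move=> f' /setD1P [_]; exact: hE.
    by move=> s sS; apply: (cycle_drop un _ cc); [exact: sc | exact: hC].
  by exists t; split => //; apply: subset_trans tsub (subD1set _ _).
move=> hacyc.
exists ([set v | connect (adjF F) x v], F); split => //=; split.
- split => //=.
  + move=> f fF; split; first exact: hE.
    by apply/subsetP => w wf; rewrite inE; exact: hreach wf.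
  + by apply/set0Pn; exists x; rewrite inE connect0.
  + move=> u v; rewrite !inE => hu hv.
    by apply: connect_trans hv; rewrite connectF_sym.
- by apply/subsetP => s sS; rewrite inE; exact: hC.
Qed.

Lemma span_tree (F : {set {set T}}) : good F -> exists t, is_Stree g S t /\ t.2 \subset F.
Proof.
move: {2}#|F| (leqnn #|F|) => n; elim: n F => [|n IHn] F hn hg.
  apply: span_step => // F' pF'; move: (proper_card pF'); by rewrite ltnNge (leq_trans hn).
apply: span_step => // F' pF' hg'; apply: IHn => //.
by rewrite -ltnS (leq_trans (proper_card pF')).
Qed.

End Span.

Lemma trees_of_family (T : finType) (g : rel T) (S : {set T}) (x : T)
  (I : finType) (Fam : I -> {set {set T}}) k :
  #|I| = k -> (forall i, good g S x (Fam i)) ->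
  (forall i j, i != j -> [disjoint Fam i & Fam j]) -> has_trees g S k.
Proof.
move=> hk hg hd.
have H i : exists t, is_Stree g S t /\ t.2 \subset Fam i by apply: span_tree.
pose tr i := proj1_sig (constructive_indefinite_description _ (H i)).
have trP i : is_Stree g S (tr i) /\ (tr i).2 \subset Fam i.
  exact: (proj2_sig (constructive_indefinite_description _ (H i))).
pose f (m : 'I_k) : I := enum_val (cast_ord (esym hk) m).
exists (fun m => tr (f m)); split; first by move=> m; case: (trP (f m)).
move=> m1 m2 ne; apply: (disjointW (trP _).2 (trP _).2); apply: hd.
apply: contra ne => /eqP e; apply/eqP.
by apply: (cast_ord_inj (eq_n := esym hk)); apply: enum_val_inj.
Qed.

Lemma edge_neq (T : finType) (e : rel T) u v :
  irreflexive e -> is_edge e [set u; v] -> u != v.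
Proof.
move=> irr /is_edgeP [a [b [eab E]]]; apply/eqP => uv; subst v.
have : a \in [set u; u] by rewrite E set21.
have : b \in [set u; u] by rewrite E set22.
by move=> /set2P [] ? /set2P [] ?; subst; rewrite irr in eab.
Qed.

Lemma edge_rel (T : finType) (e : rel T) u v :
  symmetric e -> irreflexive e -> is_edge e [set u; v] -> e u v.
Proof.
move=> sym irr ie; have nuv := edge_neq irr ie.
move: ie => /is_edgeP [a [b [eab E]]].
have : u \in [set a; b] by rewrite -E set21.
have : v \in [set a; b] by rewrite -E set22.
move=> /set2P [] ? /set2P [] ?; subst; rewrite ?eqxx // in nuv.
by rewrite sym.
Qed.

Lemma disjP' (T : finType) (A B : {set T}) :
  (forall E, E \in A -> E \in B -> False) -> [disjoint A & B].
Proof.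
move=> H; rewrite -setI_eq0; apply/eqP/setP => E; rewrite in_setI in_set0.
by apply/negP => /andP [h1 h2]; case: (H _ h1 h2).
Qed.

Ltac crush :=
  repeat match goal with
  | H : is_true (_ || _) |- _ => case/orP: H => H
  | H : is_true (_ && _) |- _ => let H1 := fresh H in case/andP: H => H H1
  | H : is_true (_ == _) |- _ => move/eqP: H => H
  | H : is_true (~~ (_ == _)) |- _ => move/eqP: H => H
  | H : (_ == _) = false |- _ => move/negbT/eqP: H => H
  | H : (_ == _) = true |- _ => move/eqP: H => H
  | H : @eq (prod _ _) (pair _ _) (pair _ _) |- _ => injection H as ? ?
  | H : (~~ (_ == _)) = false |- _ => move/negbFE/eqP: H => H
  | H : @eq (option _) (Some _) (Some _) |- _ => injection H as H
  end; subst; try congruence.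

Section Constr.
Variables (T1 T2 : finType) (g : rel T1) (h : rel T2).
Hypotheses (gsym : symmetric g) (girr : irreflexive g).
Hypotheses (hsym : symmetric h) (hirr : irreflexive h).
Hypothesis (cg : connected_graph g).
Variables (x y z : T1 * T2).
Hypotheses (hxy : x.1 != y.1) (hyz : y.1 != z.1) (hxz : x.1 != z.1).
Variables (s1 s2 s3 : T2).
Hypotheses (d12 : s1 != s2) (d13 : s1 != s3) (d23 : s2 != s3).
Hypotheses (x2S : x.2 \in [set s1; s2; s3]) (y2S : y.2 \in [set s1; s2; s3])
  (z2S : z.2 \in [set s1; s2; s3]).
Variables (l1 l2 : nat) (trG : 'I_l1 -> {set T1} * {set {set T1}})
  (trR : 'I_l2 -> {set T2} * {set {set T2}}).
Hypotheses (trGS : forall i, is_Stree g [set x.1; y.1; z.1] (trG i))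
  (trGd : forall i j, i != j -> [disjoint (trG i).2 & (trG j).2]).
Hypotheses (trRS : forall j, is_Stree h [set s1; s2; s3] (trR j))
  (trRd : forall i j, i != j -> [disjoint (trR i).2 & (trR j).2]).

Definition spec (a : T1) : option T2 :=
  if a == x.1 then Some x.2 else if a == y.1 then Some y.2
  else if a == z.1 then Some z.2 else None.
Definition phi (w : T2) (a : T1) : T1 * T2 := (a, odflt w (spec a)).
Definition rk (a b : T1) := (enum_rank a < enum_rank b)%N.
Definition gad (a b : T1) (w : T2) : seq (T2 * T2) :=
  match spec a, spec b with
  | Some va, Some vb =>
      if w == va then [:: (va, vb)] else
      let al := if w == vb then va else w in
      let be := if w == vb then vb else w in
      [:: (va, al); (be, al); (be, vb)]
  | sa, sb => [:: (odflt w sa, odflt w sb)]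
  end.
Definition edg (a b : T1) (p : T2 * T2) : {set T1 * T2} := [set (a, p.1); (b, p.2)].

Lemma specx : spec x.1 = Some x.2. Proof. by rewrite /spec eqxx. Qed.
Lemma specy : spec y.1 = Some y.2.
Proof. by rewrite /spec eq_sym (negbTE hxy) eqxx. Qed.
Lemma specz : spec z.1 = Some z.2.
Proof. by rewrite /spec eq_sym (negbTE hxz) eq_sym (negbTE hyz) eqxx. Qed.

Lemma gad_disj a b w w' p : w != w' -> p \in gad a b w -> p \in gad a b w' -> False.
Proof.
rewrite /gad; case: (spec a) => [va|]; case: (spec b) => [vb|] /=; 
  case: p => s t; rewrite ?inE /=;
  do ? case: ifP; rewrite ?inE /= ?xpair_eqE => *; crush.
Qed.

Lemma gad_form a b w p : p \in gad a b w ->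
  [\/ spec a = Some p.1, spec b = Some p.2, p.1 = p.2 |
      spec a = Some p.2 /\ spec b = Some p.1].
Proof.
rewrite /gad; case: (spec a) => [va|]; case: (spec b) => [vb|] /=;
  case: p => s t; rewrite ?inE /=;
  do ? case: ifP; rewrite ?inE /= ?xpair_eqE => *; crush; 
  first [by constructor 1 | by constructor 2 | by constructor 3 | by constructor 4].
Qed.

Lemma edg_inj a b a' b' p p' : a != b -> rk a b -> rk a' b' ->
  edg a b p = edg a' b' p' -> [/\ a = a', b = b' & p = p'].
Proof.
case: p => s t; case: p' => s' t' /= nab r1 r2 E.
have : (a, s) \in edg a' b' (s', t') by rewrite -E set21.
have : (b, t) \in edg a' b' (s', t') by rewrite -E set22.
move=> /set2P [] [? ?] /set2P [] [? ?]; subst.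
- by rewrite eqxx in nab.
- by move: (ltn_trans r1 r2); rewrite ltnn.
- by [].
- by rewrite eqxx in nab.
Qed.

Lemma edg_mem a b p : (a, p.1) \in edg a b p /\ (b, p.2) \in edg a b p.
Proof. by rewrite /edg set21 set22. Qed.

Lemma rk_total a b : a != b -> rk a b || rk b a.
Proof.
move=> nab; rewrite /rk -neq_ltn; apply: contra nab => /eqP e.
by apply/eqP; apply: enum_rank_inj; apply: val_inj.
Qed.

Lemma three_lemma (e1 e2 : option T2) :
  ~~ [&& Some s1 \in [:: e1; e2], Some s2 \in [:: e1; e2] & Some s3 \in [:: e1; e2]].
Proof.
move: d12 d13 d23 => /eqP ? /eqP ? /eqP ?.
rewrite !inE; apply/negP => H; crush.
Qed.

Definition pick3 (P : pred T2) := if P s1 then s1 else if P s2 then s2 else s3.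

Lemma pick3P (P : pred T2) e1 e2 :
  (forall s, ~~ P s -> Some s \in [:: e1; e2]) ->
  P (pick3 P) /\ pick3 P \in [set s1; s2; s3].
Proof.
move=> H; rewrite /pick3; case: ifP => [-> | /negbT H1]; first by rewrite !inE eqxx.
case: ifP => [-> | /negbT H2]; first by rewrite !inE eqxx orbT.
split; last by rewrite !inE eqxx !orbT.
apply: contraR (three_lemma e1 e2) => H3.
by rewrite (H _ H1) (H _ H2) (H _ H3).
Qed.

Definition sig a b := pick3 (fun s => (Some s != spec a) && (Some s != spec b)).

Lemma sigP a b :
  [/\ Some (sig a b) != spec a, Some (sig a b) != spec b & sig a b \in [set s1; s2; s3]].
Proof.
have [] := @pick3P (fun s => (Some s != spec a) && (Some s != spec b)) (spec a) (spec b).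
  by move=> s; rewrite negb_and !negbK !inE.
by move=> /andP [H1 H2] H3; split.
Qed.

Definition nb (j : 'I_l2) s := odflt s [pick t | [set s; t] \in (trR j).2].

Lemma nbP j s : s \in [set s1; s2; s3] ->
  [/\ [set s; nb j s] \in (trR j).2, nb j s != s & nb j s \in (trR j).1].
Proof.
move=> sS; have [[sub W0 conn acyc] SW] := trRS j.
have [s' s'S ns] : exists2 s', s' \in [set s1; s2; s3] & s' != s.
  case: (eqVneq s s1) => [->|ne]; [exists s2 | exists s1];
    by rewrite ?inE ?eqxx ?orbT // eq_sym.
have := conn s s' (subsetP SW _ sS) (subsetP SW _ s'S) => /connectP [[|t p] hp ep].
  by move: ns; rewrite ep eqxx.
move: hp => /= /andP [/andP [nst hst] _].
have hnb : [set s; nb j s] \in (trR j).2.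
  by rewrite /nb; case: pickP => [t' -> //|/(_ t)]; rewrite hst.
have [ie fs] := sub _ hnb.
split => //; first by rewrite eq_sym; apply: edge_neq ie.
by apply: (subsetP fs); rewrite set22.
Qed.

Lemma nb_inj j j' s : s \in [set s1; s2; s3] -> nb j s = nb j' s -> j = j'.
Proof.
move=> sS e; apply/eqP; apply: contraT => ne.
have [h1 _ _] := nbP j sS; have [h2 _ _] := nbP j' sS.
by move: h2; rewrite -e (disjointFr (trRd ne) h1).
Qed.

Definition tau a b := pick3 (fun s => (s != sig a b) && (Some s != spec a)).

Lemma tauP a b :
  [/\ tau a b != sig a b, Some (tau a b) != spec a & tau a b \in [set s1; s2; s3]].
Proof.
have [] := @pick3P (fun s => (s != sig a b) && (Some s != spec a)) (Some (sig a b)) (spec a).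
  by move=> s; rewrite negb_and !negbK !inE.
by move=> /andP [H1 H2] H3; split.
Qed.

Definition cross a b (j : 'I_l2) : T2 * T2 :=
  let s := sig a b in let n := nb j s in
  if Some n != spec b then (s, n) else if Some n != spec a then (n, s) else (tau a b, s).

Lemma crossP a b j : let c := cross a b j in
  [/\ Some c.1 != spec a, Some c.2 != spec b, c.1 != c.2,
      ~~ ((spec a == Some c.2) && (spec b == Some c.1)) &
      (c.1 \in (trR j).1) && (c.2 \in (trR j).1)].
Proof.
have [[sub W0 conn acyc] SW] := trRS j.
have [sa sb sS] := sigP a b; have [ta ts tS] := tauP a b.
have [_ nn nW] := nbP j sS.
have sW := subsetP SW _ sS; have tW := subsetP SW _ tS.
rewrite /cross /=; case: ifP => [n1|/negbFE n1]; rewrite /= ?nW ?sW ?tW //.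
  by split => //; rewrite 1?eq_sym // negb_and (eq_sym (spec b)) sb orbT.
case: ifP => [n2|/negbFE n2] /=; split => //; rewrite ?(eq_sym (spec a)) ?sa ?n2 //.
all: by rewrite ?nW ?sW ?tW ?(negbTE sa).
Qed.

Lemma cross_inj a b j j' : cross a b j = cross a b j' -> j = j'.
Proof.
have [sa sb sS] := sigP a b; have [ta ts tS] := tauP a b.
have [_ nn _] := nbP j sS; have [_ nn' _] := nbP j' sS.
move=> e; apply: (nb_inj sS); move: e.
rewrite /cross; repeat (case: ifP => ?); move=> *; crush.
Qed.

Definition FamG (i : 'I_l1) (w : T2) : {set {set T1 * T2}} :=
  [set E | [exists a, exists b, exists p,
     [&& g a b, [set a; b] \in (trG i).2, rk a b, p \in gad a b w & E == edg a b p]]].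

Lemma FamGP i w E : E \in FamG i w -> exists a b p,
  [/\ g a b, [set a; b] \in (trG i).2, rk a b, p \in gad a b w & E = edg a b p].
Proof.
rewrite inE => /existsP [a /existsP [b /existsP [p /and5P [h1 h2 h3 h4 /eqP h5]]]].
by exists a, b, p.
Qed.

Lemma FamG_in a b p i w : g a b -> [set a; b] \in (trG i).2 -> rk a b ->
  p \in gad a b w -> edg a b p \in FamG i w.
Proof.
move=> h1 h2 h3 h4; rewrite inE; apply/existsP; exists a; apply/existsP; exists b.
by apply/existsP; exists p; rewrite h1 h2 h3 h4 eqxx.
Qed.

Lemma adjF_edg (F : {set {set T1 * T2}}) a b p : a != b -> edg a b p \in F ->
  adjF F (a, p.1) (b, p.2) /\ adjF F (b, p.2) (a, p.1).
Proof.
move=> nab hin; have ne : (a, p.1) != (b, p.2).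
  by apply: contra nab => /eqP [-> _].
by rewrite /adjF ne eq_sym ne /=; split; [exact: hin | rewrite setUC; exact: hin].
Qed.

Lemma G1' i w a b : g a b -> [set a; b] \in (trG i).2 -> rk a b ->
  connect (adjF (FamG i w)) (phi w a) (phi w b).
Proof.
move=> gab hin r; have nab : a != b by apply: contraTneq gab => ->; rewrite girr.
have step : forall p, p \in gad a b w ->
    adjF (FamG i w) (a, p.1) (b, p.2) /\ adjF (FamG i w) (b, p.2) (a, p.1).
  by move=> p hp; apply: adjF_edg => //; apply: FamG_in.
move: step; rewrite /phi /gad; case: (spec a) => [va|]; case: (spec b) => [vb|] /= step;
  try by apply: connect1; case: (step _ (mem_head _ _)).
case: ifP => [/eqP ew|nw] in step *.
  by apply: connect1; case: (step _ (mem_head _ _)).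
have [h1 _] := step _ (mem_head _ _).
have [_ h2] := step _ (mem_nth (va, va) (s := [:: _; _; _]) (n := 1) isT).
have [h3 _] := step _ (mem_nth (va, va) (s := [:: _; _; _]) (n := 2) isT).
apply: connect_trans (connect1 h1) _; apply: connect_trans (connect1 h2) _.
exact: connect1 h3.
Qed.

Lemma G1 i w a b : adjF (trG i).2 a b ->
  connect (adjF (FamG i w)) (phi w a) (phi w b).
Proof.
move=> /andP [nab hin]; have [[sub _ _ _] _] := trGS i.
have gab : g a b by apply: edge_rel => //; case: (sub _ hin).
case/orP: (rk_total nab) => r; first exact: G1'.
rewrite connectF_sym; apply: G1' => //; first by rewrite gsym.
by rewrite setUC.
Qed.

Lemma phix w : phi w x.1 = x. Proof. by rewrite /phi specx -surjective_pairing. Qed.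
Lemma phiy w : phi w y.1 = y. Proof. by rewrite /phi specy -surjective_pairing. Qed.
Lemma phiz w : phi w z.1 = z. Proof. by rewrite /phi specz -surjective_pairing. Qed.

Lemma edg_is_edge a b p : g a b -> is_edge (lexprod g h) (edg a b p).
Proof.
move=> gab; apply/existsP; exists (a, p.1); apply/existsP; exists (b, p.2).
by rewrite /lexprod /= gab /edg eqxx.
Qed.

Lemma FamG_good i w : good (lexprod g h) [set x; y; z] x (FamG i w).
Proof.
split.
  by move=> E /FamGP [a [b [p [gab _ _ _ ->]]]]; apply: edg_is_edge.
have [[_ _ conn _] SW] := trGS i.
have key : forall s, s \in [set x.1; y.1; z.1] ->
    connect (adjF (FamG i w)) (phi w x.1) (phi w s).
  move=> s hs; apply: (connect_map (@G1 i w)); apply: conn; apply: (subsetP SW) => //.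
  by rewrite !inE eqxx.
move=> s; rewrite !inE => /orP [/orP [] | ] /eqP ->.
- exact: connect0.
- by rewrite -(phix w) -(phiy w); apply: key; rewrite !inE eqxx ?orbT.
- by rewrite -(phix w) -(phiz w); apply: key; rewrite !inE eqxx ?orbT.
Qed.

Definition FamL (j : 'I_l2) : {set {set T1 * T2}} :=
  [set E | [exists a, exists c, exists d,
     [&& h c d, [set c; d] \in (trR j).2 & E == [set (a, c); (a, d)]]]].
Definition FamC (j : 'I_l2) : {set {set T1 * T2}} :=
  [set E | [exists a, exists b, [&& g a b, rk a b & E == edg a b (cross a b j)]]].
Definition FamH j := FamL j :|: FamC j.

Lemma FamLP j E : E \in FamL j -> exists a c d,
  [/\ h c d, [set c; d] \in (trR j).2 & E = [set (a, c); (a, d)]].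
Proof.
rewrite inE => /existsP [a /existsP [c /existsP [d /and3P [h1 h2 /eqP h3]]]].
by exists a, c, d.
Qed.

Lemma FamCP j E : E \in FamC j -> exists a b,
  [/\ g a b, rk a b & E = edg a b (cross a b j)].
Proof.
rewrite inE => /existsP [a /existsP [b /and3P [h1 h2 /eqP h3]]].
by exists a, b.
Qed.

Lemma layer_conn j a s t : s \in (trR j).1 -> t \in (trR j).1 ->
  connect (adjF (FamH j)) (a, s) (a, t).
Proof.
have [[sub _ conn _] _] := trRS j.
move=> hs ht; apply: (connect_map (f := fun c => (a, c))) (conn _ _ hs ht).
move=> c d /andP [ncd hin]; apply: connect1.
have hcd : h c d by apply: edge_rel => //; case: (sub _ hin).
rewrite /adjF /= xpair_eqE eqxx ncd /=.
rewrite inE; apply/orP; left; rewrite inE.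
apply/existsP; exists a; apply/existsP; exists c; apply/existsP; exists d.
by rewrite hcd hin eqxx.
Qed.

Lemma cross_conn' j a b : g a b -> rk a b -> exists s t,
  [/\ s \in (trR j).1, t \in (trR j).1 & connect (adjF (FamH j)) (a, s) (b, t)].
Proof.
move=> gab r; have nab : a != b by apply: contraTneq gab => ->; rewrite girr.
have [_ _ _ _ /andP [m1 m2]] := crossP a b j.
exists (cross a b j).1, (cross a b j).2; split => //; apply: connect1.
have hin : edg a b (cross a b j) \in FamH j.
  rewrite inE; apply/orP; right; rewrite inE; apply/existsP; exists a; apply/existsP; exists b.
  by rewrite gab r eqxx.
by case: (adjF_edg nab hin).
Qed.

Lemma cross_conn j a b : g a b -> exists s t,
  [/\ s \in (trR j).1, t \in (trR j).1 & connect (adjF (FamH j)) (a, s) (b, t)].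
Proof.
move=> gab; have nab : a != b by apply: contraTneq gab => ->; rewrite girr.
case/orP: (rk_total nab) => r; first exact: cross_conn'.
have [s [t [hs ht c]]] : exists s t,
  [/\ s \in (trR j).1, t \in (trR j).1 & connect (adjF (FamH j)) (b, s) (a, t)].
  by apply: cross_conn' => //; rewrite gsym.
by exists t, s; split => //; rewrite connectF_sym.
Qed.

Lemma FamH_good j : good (lexprod g h) [set x; y; z] x (FamH j).
Proof.
have [[sub _ conn _] SW] := trRS j.
split.
  move=> E; rewrite inE => /orP [/FamLP [a [c [d [hcd _ ->]]]] | /FamCP [a [b [gab _ ->]]]].
    apply/existsP; exists (a, c); apply/existsP; exists (a, d).
    by rewrite /lexprod /= !eqxx hcd orbT.
  exact: edg_is_edge.
have x2W : x.2 \in (trR j).1 by apply: (subsetP SW).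
have base : forall s, s \in (trR j).1 -> connect (adjF (FamH j)) x (x.1, s).
  by move=> s hs; rewrite {1}[x]surjective_pairing; apply: layer_conn.
have key : forall p c, (forall s, s \in (trR j).1 -> connect (adjF (FamH j)) x (c, s)) ->
    path g c p -> forall s, s \in (trR j).1 -> connect (adjF (FamH j)) x (last c p, s).
  elim=> [|d p IHp] c hc //= /andP [gcd hp]; apply: IHp hp => s hs.
  have [s0 [t0 [hs0 ht0 cc]]] := cross_conn j gcd.
  apply: connect_trans (hc _ hs0) _; apply: connect_trans cc _; exact: layer_conn.
have fin : forall v, v \in [set x; y; z] -> v.2 \in [set s1; s2; s3] ->
    connect (adjF (FamH j)) x v.
  move=> v _ hv; have /connectP [p hp e] := cg x.1 v.1.
  rewrite [v]surjective_pairing e; apply: key base hp _ _.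
  exact: (subsetP SW).
move=> v hv; apply: fin => //; move: hv x2S y2S z2S; rewrite !inE => /orP [/orP [] | ] /eqP -> //.
Qed.


Lemma layer_inj (a a' : T1) (c d c' d' : T2) :
  [set (a, c); (a, d)] = [set (a', c'); (a', d')] -> a = a' /\ [set c; d] = [set c'; d'].
Proof.
move=> E; have ea : a = a'.
  have : (a, c) \in [set (a', c'); (a', d')] by rewrite -E set21.
  by case/set2P => [[-> _]|[-> _]].
subst a'; split => //; apply/setP => u.
by move: (congr1 (fun S : {set T1 * T2} => (a, u) \in S) E); rewrite !inE !xpair_eqE !eqxx.
Qed.

Lemma layer_edg_neq (a a' b' : T1) (c d : T2) p : a' != b' -> [set (a, c); (a, d)] <> edg a' b' p.
Proof.
move=> nab E; have [m1 m2] := edg_mem a' b' p; rewrite -E in m1 m2.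
move: m1 m2 => /set2P [] [e1 _] /set2P [] [e2 _]; subst;
  by rewrite eqxx in nab.
Qed.

Lemma gab_neq a b : g a b -> a != b.
Proof. by move=> gab; apply: contraTneq gab => ->; rewrite girr. Qed.

Lemma disjG i w i' w' : (i, w) != (i', w') -> [disjoint FamG i w & FamG i' w'].
Proof.
move=> ne; apply: disjP' => E /FamGP [a [b [p [gab hin r hp ->]]]]
  /FamGP [a' [b' [p' [gab' hin' r' hp' E']]]].
have [ea eb ep] := edg_inj (gab_neq gab) r r' E'; subst a' b' p'.
case: (eqVneq i i') => [ei|nei].
  subst i'; apply: (gad_disj (w := w) (w' := w')) hp hp'.
  by apply: contra ne => /eqP ->.
by move: hin'; rewrite (disjointFr (trGd nei) hin).
Qed.

Lemma disjH j j' : j != j' -> [disjoint FamH j & FamH j'].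
Proof.
move=> ne; apply: disjP' => E; rewrite /FamH !in_setU.
move=> /orP [/FamLP [a [c [d [_ hin ->]]]] | /FamCP [a [b [gab r ->]]]]
  /orP [/FamLP [a' [c' [d' [_ hin' E']]]] | /FamCP [a' [b' [gab' r' E']]]].
- have [_ e2] := layer_inj E'; rewrite -e2 in hin'.
  by move: hin'; rewrite (disjointFr (trRd ne) hin).
- exact: layer_edg_neq (gab_neq gab') E'.
- by apply: layer_edg_neq (gab_neq gab) (esym E').
- have [ea eb ep] := edg_inj (gab_neq gab) r r' E'; subst a' b'.
  by move/eqP: ne; apply; apply: cross_inj ep.
Qed.

Lemma disjHG j i w : [disjoint FamH j & FamG i w].
Proof.
apply: disjP' => E; rewrite /FamH in_setU.
move=> /orP [/FamLP [a [c [d [_ hin ->]]]] | /FamCP [a [b [gab r ->]]]]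
  /FamGP [a' [b' [p' [gab' hin' r' hp' E']]]].
  exact: layer_edg_neq (gab_neq gab') E'.
have [ea eb ep] := edg_inj (gab_neq gab) r r' E'; subst a' b' p'.
have [h1 h2 h3 h4 _] := crossP a b j.
case: (gad_form hp') => [e|e|e|[e e']].
- by rewrite e eqxx in h1.
- by rewrite e eqxx in h2.
- by rewrite e eqxx in h3.
- by rewrite e e' !eqxx in h4.
Qed.

Definition Fam (k : ('I_l2 + ('I_l1 * T2))%type) : {set {set T1 * T2}} :=
  match k with inl j => FamH j | inr iw => FamG iw.1 iw.2 end.

Lemma Fam_good k : good (lexprod g h) [set x; y; z] x (Fam k).
Proof. case: k => [j | [i w]] /=; [exact: FamH_good | exact: FamG_good]. Qed.

Lemma Fam_disj k k' : k != k' -> [disjoint Fam k & Fam k'].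
Proof.
case: k => [j | [i w]]; case: k' => [j' | [i' w']] /= ne.
- by apply: disjH; apply: contra ne => /eqP ->.
- exact: disjHG.
- by rewrite disjoint_sym; apply: disjHG.
- by apply: disjG; apply: contra ne => /eqP ->.
Qed.

Lemma main_sec : has_trees (lexprod g h) [set x; y; z] (l2 + l1 * #|T2|).
Proof.
apply: (@trees_of_family _ _ _ x _ Fam).
- by rewrite card_sum card_prod !card_ord.
- exact: Fam_good.
- exact: Fam_disj.
Qed.

End Constr.

Lemma card3 (T : finType) (a b c : T) : a != b -> a != c -> b != c ->
  #|[set a; b; c]| = 3.
Proof.
move=> ab ac bc; rewrite setUC cardsU1 cards2 !inE ab /=.
by rewrite eq_sym (negbTE ac) eq_sym (negbTE bc).
Qed.

Lemma extend3 (T : finType) (A : {set T}) : #|A| <= 3 -> 3 <= #|T| ->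
  exists B : {set T}, A \subset B /\ #|B| = 3.
Proof.
move=> hA hT; move: {2}(3 - #|A|) (erefl (3 - #|A|)) => n.
elim: n A hA => [|n IHn] A hA hn.
  by exists A; split => //; lia.
have ltA : #|A| < #|T| by lia.
have [t tA] : exists t, t \notin A.
  have : 0 < #|~: A| by have := cardsC A; lia.
  by move/card_gt0P => [t]; rewrite inE => ?; exists t.
have [B [sB cB]] : exists B : {set T}, t |: A \subset B /\ #|B| = 3.
  apply: IHn; rewrite cardsU1 tA /=.
    by move: hn; case: #|A| => // m; lia.
  by lia.
by exists B; split => //; apply: subset_trans sB; apply: subsetUr.
Qed.

Lemma three_cover (T : finType) (v1 v2 v3 : T) : 3 <= #|T| ->
  exists s1 s2 s3 : T, [/\ s1 != s2, s1 != s3, s2 != s3 &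
    [/\ v1 \in [set s1; s2; s3], v2 \in [set s1; s2; s3] & v3 \in [set s1; s2; s3]]].
Proof.
move=> hT.
have hA : #|[set v1; v2; v3]| <= 3.
  by rewrite setUC cardsU1 cards2; case: (_ \notin _); case: (_ != _).
have [B [sB cB]] := extend3 hA hT.
have hs : size (enum B) = 3 by rewrite -cardE.
have hu := enum_uniq (mem B).
have hm : forall v, v \in [set v1; v2; v3] -> v \in enum B.
  by move=> v hv; rewrite mem_enum; apply: (subsetP sB).
case e: (enum B) hs hu hm => [|s1 [|s2 [|s3 [|]]]] // _ hu hm.
move: hu; rewrite /= !inE negb_or => /andP [/andP [n12 n13] /andP [n23 _]].
exists s1, s2, s3; split => //; split.
all: [> move: (hm v1) | move: (hm v2) | move: (hm v3)].
all: by rewrite !inE eqxx ?orbT /= ?orbA => ->.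
Qed.

Unset Implicit Arguments.

Theorem lemma3p3 (T1 T2 : finType) (g : rel T1) (h : rel T2)
  (sg : simple_graph g) (sh : simple_graph h)
  (cg : connected_graph g) (ch : connected_graph h)
  (n1 : 3 <= #|T1|) (n2 : 3 <= #|T2|)
  (l1 l2 : nat) (hl1 : is_lambda3 g l1) (hl2 : is_lambda3 h l2)
  (x y z : T1 * T2)
  (hxy : x.1 != y.1) (hyz : y.1 != z.1) (hxz : x.1 != z.1) :
  has_trees (lexprod g h) [set x; y; z] (l2 + l1 * #|T2|).
Proof.
case: sg => gsym girr; case: sh => hsym hirr.
have [s1 [s2 [s3 [d12 d13 d23 [x2S y2S z2S]]]]] := three_cover x.2 y.2 z.2 n2.
have [/(_ [set x.1; y.1; z.1] (card3 hxy hxz hyz)) [trG [trGS trGd]] _] := hl1.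
have [/(_ [set s1; s2; s3] (card3 d12 d13 d23)) [trR [trRS trRd]] _] := hl2.
exact: (main_sec gsym girr hsym hirr cg hxy hyz hxz d12 d13 d23 x2S y2S z2S trGS trGd trRS trRd).
Qed.
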